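(* For every sufficiently large $n$, the triple $(P_4,K_3,C_5)$ is both resistant and color-resistant for $n$; that is, with $H_1=P_4$, $H_2=K_3$, $F=C_5$: (i) $\mathrm{ex}^{\mathrm{col}}(n,(P_4,K_3),C_5)=\max\{\mathrm{ex}(n,P_4,C_5),\mathrm{ex}(n,K_3,C_5)\}$, and (ii) there is a $C_5$-free $n$-vertex graph $G$ with $\mathcal N(H_i,G)=\max\{\mathrm{ex}(n,P_4,C_5),\mathrm{ex}(n,K_3,C_5)\}$ for some $i\in\{1,2\}$ such that $\mathrm{ex}(n,(P_4,K_3),C_5)=\mathcal N(P_4,G)+\mathcal N(K_3,G)$.
   Context: $P_4$ is the path on $4$ vertices, $C_5$ the cycle of length $5$. $\mathcal N(H,G)$ is the number of subgraphs of $G$ isomorphic to $H$; $\mathrm{ex}(n,H,F)$ is the maximum of $\mathcal N(H,G)$ over $F$-free $n$-vertex graphs. $\mathrm{ex}(n,(H_1,H_2),F)$ is the maximum of $\mathcal N(H_1,G)+\mathcal N(H_2,G)$ over $F$-free $n$-vertex graphs $G$. For a graph $G$ with edges colored $1,2$, $G_i$ is the subgraph of edges of color $i$; $\mathrm{ex}^{\mathrm{col}}(n,(H_1,H_2),F)$ is the maximum of $\mathcal N(H_1,G_1)+\mathcal N(H_2,G_2)$ over $F$-free $n$-vertex graphs $G$ and all $2$-colorings of their edges. A tuple $(H_1,\dots,H_k,F)$ is called color-resistant for $n$ if $\mathrm{ex}^{\mathrm{col}}(n,(H_1,\dots,H_k),F)=\max_i\mathrm{ex}(n,H_i,F)$,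 and resistant for $n$ if there is an $F$-free $n$-vertex graph $G$ with $\mathcal N(H_i,G)=\max_j \mathrm{ex}(n,H_j,F)$ for some $i$ and $\mathrm{ex}(n,(H_1,\dots,H_k),F)=\sum_j\mathcal N(H_j,G)$. *)

(* Defs.v *)
From mathcomp Require Import all_boot.
Set Implicit Arguments. Unset Strict Implicit. Unset Printing Implicit Defensive.

Definition simple_graph (V : finType) (E : {set {set V}}) : bool :=
  [forall e in E, #|e| == 2].

Definition img_edges (V W : finType) (f : V -> W) (E : {set {set V}})
  : {set {set W}} := [set f @: (e : {set V}) | e in E].

(* Copies of H (given by its edge set EH on vertex type VH, without isolated
   vertices) in G : the subsets S of the edges of G such that the graph formed by S
   (with vertex set the endpoints of S) is isomorphic to H, i.e. S is the image of
   EH under an injective vertex map. *)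
Definition is_copy (VH W : finType) (EH : {set {set VH}}) (S : {set {set W}}) : bool :=
  [exists f : {ffun VH -> W}, injectiveb f && (S == img_edges f EH)].

Definition Ncount (VH W : finType) (EH : {set {set VH}}) (G : {set {set W}}) : nat :=
  #|[set S : {set {set W}} | (S \subset G) && is_copy EH S ]|.

Definition Ffree (VF W : finType) (EF : {set {set VF}}) (G : {set {set W}}) : bool :=
  Ncount EF G == 0.

Definition ex (n : nat) (VH VF : finType) (EH : {set {set VH}}) (EF : {set {set VF}}) : nat :=
  \max_(G : {set {set 'I_n}} | simple_graph G && Ffree EF G) Ncount EH G.

Definition ex2 (n : nat) (V1 V2 VF : finType) (E1 : {set {set V1}}) (E2 : {set {set V2}})
  (EF : {set {set VF}}) : nat :=
  \max_(G : {set {set 'I_n}} | simple_graph G && Ffree EF G) (Ncount E1 G + Ncount E2 G).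

(* ex^col(n,(H1,H2),F): a 2-coloring of the edges of G is given by the set C of
   color-1 edges; G_1 = G :&: C, G_2 = G :\: C. *)
Definition excol (n : nat) (V1 V2 VF : finType) (E1 : {set {set V1}}) (E2 : {set {set V2}})
  (EF : {set {set VF}}) : nat :=
  \max_(GC : {set {set 'I_n}} * {set {set 'I_n}} | simple_graph GC.1 && Ffree EF GC.1)
     (Ncount E1 (GC.1 :&: GC.2) + Ncount E2 (GC.1 :\: GC.2)).

Definition P4 : {set {set 'I_4}} :=
  [set e : {set 'I_4} | [exists i : 'I_4, exists j : 'I_4,
     (nat_of_ord j == i.+1) && (e == [set i; j])]].
Definition K3 : {set {set 'I_3}} :=
  [set e : {set 'I_3} | [exists i : 'I_3, exists j : 'I_3,
     (i < j) && (e == [set i; j])]].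
Definition C5 : {set {set 'I_5}} :=
  [set e : {set 'I_5} | [exists i : 'I_5, exists j : 'I_5,
     (nat_of_ord j == i.+1 %% 5) && (e == [set i; j])]].

(* Main.v *)
Require Import Defs.
From mathcomp Require Import all_boot zify.
Set Warnings "-notation-overridden".
Set Implicit Arguments. Unset Strict Implicit. Unset Printing Implicit Defensive.

Definition o4_0 : 'I_4 := @Ordinal 4 0 isT.
Definition o4_1 : 'I_4 := @Ordinal 4 1 isT.
Definition o4_2 : 'I_4 := @Ordinal 4 2 isT.
Definition o4_3 : 'I_4 := @Ordinal 4 3 isT.
Definition o3_0 : 'I_3 := @Ordinal 3 0 isT.
Definition o3_1 : 'I_3 := @Ordinal 3 1 isT.
Definition o3_2 : 'I_3 := @Ordinal 3 2 isT.
Definition o5_0 : 'I_5 := @Ordinal 5 0 isT.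
Definition o5_1 : 'I_5 := @Ordinal 5 1 isT.
Definition o5_2 : 'I_5 := @Ordinal 5 2 isT.
Definition o5_3 : 'I_5 := @Ordinal 5 3 isT.
Definition o5_4 : 'I_5 := @Ordinal 5 4 isT.

Lemma P4E : P4 = [set [set o4_0; o4_1]; [set o4_1; o4_2]; [set o4_2; o4_3]].
Proof.
apply/setP => e; rewrite !inE; apply/existsP/idP.
- case=> i /existsP[j /andP[/eqP Hj /eqP ->]].
  case: i Hj => [[|[|[|[|i]]]] Hi] //= Hj.
  + have -> : Ordinal Hi = o4_0 by apply: val_inj.
    have -> : j = o4_1 by apply: val_inj; rewrite /= Hj.
    by rewrite eqxx ?orbT.
  + have -> : Ordinal Hi = o4_1 by apply: val_inj.
    have -> : j = o4_2 by apply: val_inj; rewrite /= Hj.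
    by rewrite eqxx ?orbT.
  + have -> : Ordinal Hi = o4_2 by apply: val_inj.
    have -> : j = o4_3 by apply: val_inj; rewrite /= Hj.
    by rewrite eqxx ?orbT.
  + by move: (ltn_ord j); rewrite Hj.
- case/orP => [/orP[]|] /eqP ->.
  + by exists o4_0; apply/existsP; exists o4_1; rewrite eqxx.
  + by exists o4_1; apply/existsP; exists o4_2; rewrite eqxx.
  + by exists o4_2; apply/existsP; exists o4_3; rewrite eqxx.
Qed.

Lemma K3E : K3 = [set [set o3_0; o3_1]; [set o3_0; o3_2]; [set o3_1; o3_2]].
Proof.
apply/setP => e; rewrite !inE; apply/existsP/idP.
- case=> i /existsP[j /andP[Hij /eqP ->]].
  case: i Hij => [[|[|[|i]]] Hi] //=; case: j => [[|[|[|j]]] Hj] //= _.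
  + have -> : (Ordinal Hi) = o3_0 by apply: val_inj.
    have -> : (Ordinal Hj) = o3_1 by apply: val_inj.
    by rewrite eqxx ?orbT.
  + have -> : (Ordinal Hi) = o3_0 by apply: val_inj.
    have -> : (Ordinal Hj) = o3_2 by apply: val_inj.
    by rewrite eqxx ?orbT.
  + have -> : (Ordinal Hi) = o3_1 by apply: val_inj.
    have -> : (Ordinal Hj) = o3_2 by apply: val_inj.
    by rewrite eqxx ?orbT.
- case/orP => [/orP[]|] /eqP ->.
  + by exists o3_0; apply/existsP; exists o3_1; rewrite eqxx.
  + by exists o3_0; apply/existsP; exists o3_2; rewrite eqxx.
  + by exists o3_1; apply/existsP; exists o3_2; rewrite eqxx.
Qed.

Lemma C5E : C5 = [set [set o5_0; o5_1]; [set o5_1; o5_2]; [set o5_2; o5_3];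
                     [set o5_3; o5_4]; [set o5_4; o5_0]].
Proof.
apply/setP => e; rewrite !inE; apply/existsP/idP.
- case=> i /existsP[j /andP[/eqP Hj /eqP ->]].
  case: i Hj => [[|[|[|[|[|i]]]]] Hi] //= Hj.
  + have -> : Ordinal Hi = o5_0 by apply: val_inj.
    have -> : j = o5_1 by apply: val_inj; rewrite /= Hj.
    by rewrite eqxx ?orbT.
  + have -> : Ordinal Hi = o5_1 by apply: val_inj.
    have -> : j = o5_2 by apply: val_inj; rewrite /= Hj.
    by rewrite eqxx ?orbT.
  + have -> : Ordinal Hi = o5_2 by apply: val_inj.
    have -> : j = o5_3 by apply: val_inj; rewrite /= Hj.
    by rewrite eqxx ?orbT.
  + have -> : Ordinal Hi = o5_3 by apply: val_inj.
    have -> : j = o5_4 by apply: val_inj; rewrite /= Hj.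
    by rewrite eqxx ?orbT.
  + have -> : Ordinal Hi = o5_4 by apply: val_inj.
    have -> : j = o5_0 by apply: val_inj; rewrite /= Hj.
    by rewrite eqxx ?orbT.
- case/orP => [/orP[/orP[/orP[]|]|]|] /eqP ->.
  + by exists o5_0; apply/existsP; exists o5_1; rewrite eqxx.
  + by exists o5_1; apply/existsP; exists o5_2; rewrite eqxx.
  + by exists o5_2; apply/existsP; exists o5_3; rewrite eqxx.
  + by exists o5_3; apply/existsP; exists o5_4; rewrite eqxx.
  + by exists o5_4; apply/existsP; exists o5_0; rewrite eqxx.
Qed.

Section Graph.
Variable V : finType.
Implicit Types (G : {set {set V}}) (x y : V).

Definition nb_def G x := [set y | [set x; y] \in G].
Fact nb_key : unit. Proof. exact: tt. Qed.
Definition nb := locked_with nb_key nb_def.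
Lemma nbE G x y : (y \in nb G x) = ([set x; y] \in G).
Proof. by rewrite /nb; case: nb_key; rewrite /= /nb_def inE. Qed.

Lemma set2C x y : [set x; y] = [set y; x] :> {set V}.
Proof. exact: setUC. Qed.

Lemma nbC G x y : (y \in nb G x) = (x \in nb G y).
Proof. by rewrite !nbE set2C. Qed.

Lemma simple_neq G x y : simple_graph G -> [set x; y] \in G -> x != y.
Proof.
move=> /forallP /(_ [set x; y]) /implyP H /H.
by rewrite cards2; case: (x != y).
Qed.

Lemma nb_irr G x : simple_graph G -> x \notin nb G x.
Proof. by move=> sG; apply/negP; rewrite nbE => /(simple_neq sG); rewrite eqxx. Qed.

Lemma img_edgesE (W : finType) (f : W -> V) (E : {set {set W}}) :
  img_edges f E = [set f @: (e : {set W}) | e in E].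
Proof. by []. Qed.

Definition pth (a b c d : V) : {set {set V}} := [set [set a; b]; [set b; c]; [set c; d]].
Definition tri (a b c : V) : {set {set V}} := [set [set a; b]; [set a; c]; [set b; c]].
Definition cyc (a b c d e : V) : {set {set V}} :=
  [set [set a; b]; [set b; c]; [set c; d]; [set d; e]; [set e; a]].

Lemma img_P4 (f : 'I_4 -> V) : img_edges f P4 = pth (f o4_0) (f o4_1) (f o4_2) (f o4_3).
Proof. by rewrite img_edgesE P4E ; do ![rewrite imsetU | rewrite imsetU1 | rewrite imset_set1]. Qed.
Lemma img_K3 (f : 'I_3 -> V) : img_edges f K3 = tri (f o3_0) (f o3_1) (f o3_2).
Proof. by rewrite img_edgesE K3E ; do ![rewrite imsetU | rewrite imsetU1 | rewrite imset_set1]. Qed.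
Lemma img_C5 (f : 'I_5 -> V) :
  img_edges f C5 = cyc (f o5_0) (f o5_1) (f o5_2) (f o5_3) (f o5_4).
Proof. by rewrite img_edgesE C5E ; do ![rewrite imsetU | rewrite imsetU1 | rewrite imset_set1]. Qed.

Lemma copyP4 S : is_copy P4 S ->
  exists a b c d, uniq [:: a; b; c; d] /\ S = pth a b c d.
Proof.
case/existsP => f /andP[/injectiveP fi /eqP ->].
exists (f o4_0), (f o4_1), (f o4_2), (f o4_3); split; last exact: img_P4.
by rewrite /= !inE !(inj_eq fi).
Qed.

Lemma copyK3 S : is_copy K3 S ->
  exists a b c, uniq [:: a; b; c] /\ S = tri a b c.
Proof.
case/existsP => f /andP[/injectiveP fi /eqP ->].
exists (f o3_0), (f o3_1), (f o3_2); split; last exact: img_K3.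
by rewrite /= !inE !(inj_eq fi).
Qed.

Lemma copyC5 S : is_copy C5 S ->
  exists a b c d e, uniq [:: a; b; c; d; e] /\ S = cyc a b c d e.
Proof.
case/existsP => f /andP[/injectiveP fi /eqP ->].
exists (f o5_0), (f o5_1), (f o5_2), (f o5_3), (f o5_4); split; last exact: img_C5.
by rewrite /= !inE !(inj_eq fi).
Qed.

Lemma copyP4_of a b c d : uniq [:: a; b; c; d] -> is_copy P4 (pth a b c d).
Proof.
move=> Hu; apply/existsP; exists [ffun i : 'I_4 => nth a [:: a; b; c; d] i].
rewrite img_P4 !ffunE /= eqxx andbT.
apply/injectiveP => i j; rewrite !ffunE => /eqP.
by rewrite (@nth_uniq _ a [:: a; b; c; d] i j (ltn_ord i) (ltn_ord j) Hu) => /eqP; apply: val_inj.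
Qed.

Lemma copyC5_of a b c d e : uniq [:: a; b; c; d; e] -> is_copy C5 (cyc a b c d e).
Proof.
move=> Hu; apply/existsP; exists [ffun i : 'I_5 => nth a [:: a; b; c; d; e] i].
rewrite img_C5 !ffunE /= eqxx andbT.
apply/injectiveP => i j; rewrite !ffunE => /eqP.
by rewrite (@nth_uniq _ a [:: a; b; c; d; e] i j (ltn_ord i) (ltn_ord j) Hu) => /eqP; apply: val_inj.
Qed.

Lemma C5_of G a b c d e : uniq [:: a; b; c; d; e] ->
  [set a; b] \in G -> [set b; c] \in G -> [set c; d] \in G ->
  [set d; e] \in G -> [set e; a] \in G -> ~~ Ffree C5 G.
Proof.
move=> Hu h1 h2 h3 h4 h5; rewrite /Ffree /Ncount -lt0n card_gt0.
apply/set0Pn; exists (cyc a b c d e); rewrite inE copyC5_of // andbT.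
by apply/subsetP => S; rewrite !inE => /orP[/orP[/orP[/orP[]|]|]|] /eqP ->.
Qed.

Lemma Ncount_mono (VH : finType) (EH : {set {set VH}}) G G' :
  G \subset G' -> Ncount EH G <= Ncount EH G'.
Proof.
move=> sGG; apply: subset_leq_card; apply/subsetP => S; rewrite !inE.
by case/andP => sS ->; rewrite (subset_trans sS sGG).
Qed.

Lemma Ncount_img (VH T : finType) (EH : {set {set VH}}) G (D : {set T}) (h : T -> {set {set V}}) :
  (forall S : {set {set V}}, S \subset G -> is_copy EH S -> exists2 t, t \in D & S = h t) ->
  Ncount EH G <= #|D|.
Proof.
move=> H; apply: leq_trans (leq_imset_card h D).
apply: subset_leq_card; apply/subsetP => S; rewrite inE => /andP[sS cS].
by case: (H S sS cS) => t tD ->; apply: imset_f.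
Qed.

Lemma Ncount_split (VH T1 T2 : finType) (EH : {set {set VH}}) G G'
  (D1 : {set T1}) (D2 : {set T2}) (h1 : T1 -> {set {set V}}) (h2 : T2 -> {set {set V}}) :
  (forall S : {set {set V}}, S \subset G -> is_copy EH S -> ~~ (S \subset G') ->
     (exists2 t, t \in D1 & S = h1 t) \/ (exists2 t, t \in D2 & S = h2 t)) ->
  Ncount EH G <= Ncount EH G' + #|D1| + #|D2|.
Proof.
move=> H; rewrite /Ncount.
have sub : [set S : {set {set V}} | (S \subset G) && is_copy EH S] \subset
   [set S : {set {set V}} | (S \subset G') && is_copy EH S] :|: (h1 @: D1) :|: (h2 @: D2).
  apply/subsetP => S; rewrite inE => /andP[sS cS].
  case: (boolP (S \subset G')) => sS'.
    by rewrite !inE sS' cS.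
  case: (H S sS cS sS') => -[t tD ->].
    by rewrite !inE imset_f ?orbT.
  by rewrite !inE imset_f ?orbT.
apply: leq_trans (subset_leq_card sub) _.
rewrite cardsU; apply: leq_trans (leq_subr _ _) _.
rewrite cardsU; apply: leq_trans (leq_add (leq_subr _ _) (leq_imset_card _ _)) _.
by rewrite leq_add2r leq_add2l leq_imset_card.
Qed.

Lemma card_dep (T1 T2 : finType) (A : {set T1}) (B : T1 -> {set T2}) :
  #|[set t : T1 * T2 | (t.1 \in A) && (t.2 \in B t.1)]| = \sum_(a in A) #|B a|.
Proof.
rewrite -sum1_card.
rewrite (eq_bigl (fun t : T1 * T2 => (t.1 \in A) && (t.2 \in B t.1))); last by move=> t; rewrite inE.
rewrite -(pair_big_dep (fun a => a \in A) (fun a b => b \in B a) (fun _ _ => 1)).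
by apply: eq_bigr => a _; rewrite sum1_card.
Qed.

End Graph.

Definition Qf (m : nat) := (m./2 - 1) * (m - m./2 - 1).
Definition Pf (m : nat) := (m./2 * (m - m./2)) * Qf m.
Definition Bnd (d m : nat) := d * (m * m + 12 * m) + 4 * (d * d * m) + 4 * (d * d).

Lemma half_cases m : exists k, (m = k.*2 /\ m./2 = k) \/ (m = k.*2.+1 /\ m./2 = k).
Proof.
exists m./2; move: (odd_double_half m); case: (odd m) => /= H; [right|left]; split => //.
Qed.

Lemma sq4 x y : 4 * (x * y) <= (x + y) * (x + y).
Proof.
case: (leqP x y) => h.
  have [t ->] : exists t, y = x + t by exists (y - x); lia.
  nia.
have [t ->] : exists t, x = y + t by exists (x - y); lia.
nia.
Qed.

Lemma prodQ x y m : 1 <= x -> 1 <= y -> x + y <= m -> (x - 1) * (y - 1) <= Qf m.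
Proof.
rewrite /Qf; case: x => // x; case: y => // y _ _; rewrite !subn1 /=.
have h4 : 4 * (x * y) <= (x + y) * (x + y).
  case: (leqP x y) => h.
    have [t ->] : exists t, y = x + t by exists (y - x); lia.
    nia.
  have [t ->] : exists t, x = y + t by exists (x - y); lia.
  nia.
have [k [[-> ->]|[-> ->]]] := half_cases m; rewrite -!muln2 => Hm.
- have : (x + y) * (x + y) <= (2 * (k - 1)) * (2 * (k - 1)) by apply: leq_mul; lia.
  nia.
- have : (x + y) * (x + y) <= (2 * k - 1) * (2 * k - 1) by apply: leq_mul; lia.
  nia.
Qed.

Lemma final_arith L D m : 2 * L <= Qf m * D -> 2 * D <= m * m -> L <= Pf m.
Proof.
rewrite /Pf /Qf.
have [k [[-> ->]|[-> ->]]] := half_cases m; rewrite -!muln2 => h1 h2.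
- have -> : k * 2 - k = k by lia.
  rewrite (_ : k * 2 - k = k) in h1; last by lia.
  have hD : D <= 2 * (k * k) by nia.
  have := leq_mul (leqnn ((k - 1) * (k - 1))) hD.
  lia.
- have -> : (k * 2).+1 - k = k.+1 by lia.
  rewrite (_ : (k * 2).+1 - k = k.+1) in h1; last by lia.
  rewrite subSS subn0 in h1 *.
  have hD : D <= 2 * (k * k.+1) by nia.
  have := leq_mul (leqnn ((k - 1) * k)) hD.
  lia.
Qed.

Lemma half_odd n : (n.*2.+1)./2 = n.
Proof. by rewrite /= uphalf_double. Qed.

Lemma low_arith d m : 100 <= m -> 3 * d <= m + 6 -> 4 * Pf (m - 1) + Bnd d m + 4 <= 4 * Pf m.
Proof.
move=> hm hd.
have hB : 9 * Bnd d m <= 3 * (m + 6) * (m * m + 12 * m) + 4 * ((m + 6) * (m + 6) * m) + 4 * ((m + 6) * (m + 6)).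
  rewrite /Bnd.
  have e1 := leq_mul hd (leqnn (m * m + 12 * m)).
  have e2 := leq_mul (leq_mul hd hd) (leqnn m).
  have e3 := leq_mul hd hd.
  lia.
suff : 36 * Pf (m - 1) + (3 * (m + 6) * (m * m + 12 * m) + 4 * ((m + 6) * (m + 6) * m) + 4 * ((m + 6) * (m + 6))) + 36 <= 36 * Pf m by lia.
have [k [[Em Ek]|[Em Ek]]] := half_cases m.
- have [t Et] : exists t, k = t + 50 by exists (k - 50); rewrite Em -muln2 in hm; lia.
  have E1 : Pf m = (t + 50) * (t + 50) * ((t + 49) * (t + 49)).
    rewrite /Pf /Qf Ek; have -> : m - k = t + 50 by rewrite Em -muln2; lia.
    have -> : k - 1 = t + 49 by lia.
    have -> : t + 50 - 1 = t + 49 by lia.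
    by rewrite Et.
  have E2 : Pf (m - 1) = (t + 49) * (t + 50) * ((t + 48) * (t + 49)).
    have -> : m - 1 = (t + 49).*2.+1 by rewrite Em Et -!muln2; lia.
    rewrite /Pf /Qf half_odd.
    have -> : (t + 49).*2.+1 - (t + 49) = t + 50 by rewrite -muln2; lia.
    have -> : t + 49 - 1 = t + 48 by lia.
    by have -> : t + 50 - 1 = t + 49 by lia.
  rewrite E1 E2 Em Et -muln2.
  lia.
- have [t Et] : exists t, k = t + 50 by exists (k - 50); rewrite Em -muln2 in hm; lia.
  have E1 : Pf m = (t + 50) * (t + 51) * ((t + 49) * (t + 50)).
    rewrite /Pf /Qf Ek; have -> : m - k = t + 51 by rewrite Em -muln2; lia.
    have -> : k - 1 = t + 49 by lia.
    have -> : t + 51 - 1 = t + 50 by lia.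
    by rewrite Et.
  have E2 : Pf (m - 1) = (t + 50) * (t + 50) * ((t + 49) * (t + 49)).
    have -> : m - 1 = (t + 50).*2 by rewrite Em Et subn1.
    rewrite /Pf /Qf doubleK.
    have -> : (t + 50).*2 - (t + 50) = t + 50 by rewrite -muln2; lia.
    by have -> : t + 50 - 1 = t + 49 by lia.
  rewrite E1 E2 Em Et -muln2.
  lia.
Qed.

Lemma uniq5 (V : finType) (a b c d e : V) : a != b -> a != c -> a != d -> a != e ->
  b != c -> b != d -> b != e -> c != d -> c != e -> d != e -> uniq [:: a; b; c; d; e].
Proof. by move=> *; rewrite /= !inE !negb_or; repeat (apply/andP; split). Qed.

Lemma sum_bool_card (T : finType) (A : {set T}) (b : pred T) :
  \sum_(v in A) (b v : nat) = #|[set v in A | b v]|.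
Proof.
rewrite -sum1_card big_mkcond [RHS]big_mkcond; apply: eq_bigr => v _.
by rewrite inE; case: (v \in A); case: (b v).
Qed.

Lemma sum_sub (T : finType) (A U : {set T}) (F : T -> nat) : A \subset U ->
  \sum_(v in A) F v = \sum_(v in U) (v \in A) * F v.
Proof.
move=> sAU; rewrite [RHS](bigID (mem A)) /= [X in _ = _ + X]big1; last first.
  by move=> v /andP[_ /negbTE ->].
rewrite addn0; apply: eq_big => [v|v ->]; last by rewrite mul1n.
by case Hv: (v \in A); rewrite ?andbF // (subsetP sAU).
Qed.

Lemma card3 (T : finType) (A B C : {set T}) :
  #|A| + #|B| + #|C| <= #|A :|: B :|: C| + #|A :&: B| + #|A :&: C| + #|B :&: C|.
Proof.
have h1 := cardsUI A B.
have h2 := cardsUI (A :|: B) C.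
have h3 : #|(A :|: B) :&: C| <= #|A :&: C| + #|B :&: C|.
  by rewrite setIUl cardsU leq_subr.
lia.
Qed.

Section Deg.
Variables (V : finType) (G : {set {set V}}) (U : {set V}).
Hypothesis sG : simple_graph G.
Hypothesis fG : Ffree C5 G.
Hypothesis GU : forall e, e \in G -> e \subset U.
Local Notation N := (nb G).

Lemma nbU x y : y \in N x -> y \in U.
Proof. by rewrite nbE => /GU /subsetP; apply; rewrite !inE eqxx orbT. Qed.

Lemma nbU' x y : y \in N x -> x \in U.
Proof. by rewrite nbC; apply: nbU. Qed.

Lemma nb_sub x : N x \subset U.
Proof. by apply/subsetP => y; apply: nbU. Qed.

Lemma d_le x : #|N x| <= #|U|.
Proof. exact/subset_leq_card/nb_sub. Qed.

Lemma nb_neq x y : y \in N x -> x != y.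
Proof. by rewrite nbE; apply: simple_neq. Qed.

Lemma noC5 a b c d e : uniq [:: a; b; c; d; e] -> b \in N a -> c \in N b ->
  d \in N c -> e \in N d -> a \in N e -> False.
Proof.
move=> Hu h1 h2 h3 h4 h5; move: fG; apply/negP.
by rewrite !nbE in h1 h2 h3 h4 h5; apply: C5_of Hu h1 h2 h3 h4 h5.
Qed.

Lemma nbhd_sparse u : \sum_(v in N u) #|N v :&: N u| <= 3 * #|N u|.
Proof.
pose c v := #|N v :&: N u|.
have step v : c v <= 2 + (2 < c v) * c v.
  by case: ltnP => /= H; lia.
apply: (@leq_trans (\sum_(v in N u) (2 + (2 < c v) * c v))); first by apply: leq_sum => v _; apply: step.
rewrite big_split /= sum_nat_const mulnC.
have -> : 3 * #|N u| = 2 * #|N u| + #|N u| by lia.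
rewrite leq_add2l.
have E v : c v = \sum_(a in N u) (a \in N v : nat).
  by rewrite sum_bool_card /c; apply: eq_card => a; rewrite !inE andbC.
rewrite (eq_bigr (fun v => \sum_(a in N u) ((2 < c v) && (a \in N v) : nat))); last first.
  by move=> v _; rewrite {2}E big_distrr /=; apply: eq_bigr => a _; case: (2 < c v); case: (a \in N v).
rewrite exchange_big /= -sum1_card; apply: leq_sum => a aN.
rewrite sum_bool_card; apply/card_le1_eqP => v1 v2; rewrite !inE.
case/andP => v1N /andP[c1 a1]; case/andP => v2N /andP[c2 a2].
apply/eqP/negP => /negP ne.
have : 0 < #|(N v1 :&: N u) :\: [set a; v2]|.
  rewrite cardsD; have := subset_leq_card (subsetIr (N v1 :&: N u) [set a; v2]).
  rewrite cards2 /c in c1 *; case: (a != v2) => /=; lia.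
rewrite card_gt0 => /set0Pn[b]; rewrite !inE negb_or => /andP[/andP[ne1 ne2] /andP[bv1 bu]].
have au := aN.
apply: (@noC5 u v2 a v1 b).
- apply: uniq5.
  + exact: (@nb_neq u v2 v2N).
  + exact: (@nb_neq u a aN).
  + exact: (@nb_neq u v1 v1N).
  + exact: (@nb_neq u b bu).
  + exact: (@nb_neq v2 a a2).
  + exact: ne.
  + by rewrite eq_sym.
  + by rewrite eq_sym; exact: (@nb_neq v1 a a1).
  + by rewrite eq_sym.
  + exact: (@nb_neq v1 b bv1).
- exact: v2N.
- exact: a2.
- by rewrite nbC.
- exact: bv1.
- by rewrite nbC.
Qed.

Lemma sum_deg_nb u :
  \sum_(v in N u) #|N v| <= #|N u| * (#|U| - #|N u|) + 3 * #|N u|.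
Proof.
rewrite (eq_bigr (fun v => #|N v :&: N u| + #|N v :\: N u|)); last by move=> v _; rewrite cardsID.
rewrite big_split /= addnC leq_add ?nbhd_sparse //.
rewrite -sum_nat_const; apply: leq_sum => v _.
rewrite -(cardsDS (nb_sub u)); apply/subset_leq_card/setSD/nb_sub.
Qed.


Definition Gdel (x : V) := [set e in G | x \notin e].

Lemma pth_rev (a b c d : V) : pth a b c d = pth d c b a.
Proof.
apply/setP => e; rewrite !inE (set2C d c) (set2C c b) (set2C b a).
by case: (e == [set a; b]); case: (e == [set b; c]); case: (e == [set c; d]).
Qed.

Lemma tri_rot1 (a b c : V) : tri a b c = tri b a c.
Proof.
apply/setP => e; rewrite !inE (set2C b a).
by case: (e == [set a; b]); case: (e == [set a; c]); case: (e == [set b; c]).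
Qed.

Lemma tri_rot2 (a b c : V) : tri a b c = tri c a b.
Proof.
apply/setP => e; rewrite !inE (set2C c a) (set2C c b).
by case: (e == [set a; b]); case: (e == [set a; c]); case: (e == [set b; c]).
Qed.

Lemma pth_sub (a b c d : V) : pth a b c d \subset G -> [/\ b \in N a, c \in N b & d \in N c].
Proof. by move/subsetP => H; rewrite !nbE; split; apply: H; rewrite !inE eqxx ?orbT. Qed.

Lemma tri_sub (a b c : V) : tri a b c \subset G -> [/\ b \in N a, c \in N a & c \in N b].
Proof. by move/subsetP => H; rewrite !nbE; split; apply: H; rewrite !inE eqxx ?orbT. Qed.

Lemma touch (x : V) (S : {set {set V}}) : S \subset G -> ~~ (S \subset Gdel x) -> exists2 e, e \in S & x \in e.
Proof.
move=> sS /subsetPn [e eS]; rewrite inE (subsetP sS e eS) /= negbK => xe.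
by exists e.
Qed.

Definition D1 x := [set t : V * (V * V) | (t.1 \in N x) &&
   (t.2 \in [set p : V * V | (p.1 \in N t.1) && (p.2 \in N p.1)])].
Definition D2 x := [set t : V * (V * V) | (t.1 \in N x) &&
   (t.2 \in [set p : V * V | (p.1 \in N x) && (p.2 \in N p.1)])].
Definition D3 x := [set t : V * V | (t.1 \in N x) && (t.2 \in N x)].

Lemma del_P4 x : Ncount P4 G <= Ncount P4 (Gdel x) + #|D1 x| + #|D2 x|.
Proof.
apply: (Ncount_split (h1 := fun t => pth x t.1 t.2.1 t.2.2) (h2 := fun t => pth t.1 x t.2.1 t.2.2)).
move=> S sS cS nS.
case: (copyP4 cS) => a [b [c [d [Hu ES]]]]; subst S.
have [hab hbc hcd] := pth_sub sS.
case: (touch sS nS) => e; rewrite !inE => /orP[/orP[]|] /eqP -> /set2P [] ->.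
- left; exists (b, (c, d)); last by [].
  by rewrite /D1 !inE /= hab hbc hcd.
- right; exists (a, (c, d)); last by [].
  by rewrite /D2 !inE /= hbc hcd nbC hab.
- right; exists (a, (c, d)); last by [].
  by rewrite /D2 !inE /= hbc hcd nbC hab.
- right; exists (d, (b, a)); last by rewrite pth_rev.
  by rewrite /D2 !inE /= hcd nbC hbc nbC hab.
- right; exists (d, (b, a)); last by rewrite pth_rev.
  by rewrite /D2 !inE /= hcd nbC hbc nbC hab.
- left; exists (c, (b, a)); last by rewrite pth_rev.
  by rewrite /D1 !inE /= nbC hcd nbC hbc nbC hab.
Qed.

Lemma del_K3 x : Ncount K3 G <= Ncount K3 (Gdel x) + #|D3 x| + #|(set0 : {set V})|.
Proof.
apply: (Ncount_split (h1 := fun t => tri x t.1 t.2) (h2 := fun t : V => set0)).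
move=> S sS cS nS.
case: (copyK3 cS) => a [b [c [Hu ES]]]; subst S.
have [hab hac hbc] := tri_sub sS.
left.
case: (touch sS nS) => e; rewrite !inE => /orP[/orP[]|] /eqP -> /set2P [] ->.
- exists (b, c); last by [].
  by rewrite /D3 !inE /= hab hac.
- exists (a, c); last by rewrite tri_rot1.
  by rewrite /D3 !inE /= hbc nbC hab.
- exists (b, c); last by [].
  by rewrite /D3 !inE /= hab hac.
- exists (a, b); last by rewrite tri_rot2.
  by rewrite /D3 !inE /= nbC hac nbC hbc.
- exists (a, c); last by rewrite tri_rot1.
  by rewrite /D3 !inE /= hbc nbC hab.
- exists (a, b); last by rewrite tri_rot2.
  by rewrite /D3 !inE /= nbC hac nbC hbc.
Qed.

Lemma cardD1' x : #|D1 x| = \sum_(u in N x) \sum_(v in N u) #|N v|.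
Proof.
rewrite /D1 (card_dep (N x) (fun u => [set p : V * V | (p.1 \in N u) && (p.2 \in N p.1)])).
by apply: eq_bigr => u _; rewrite (card_dep (N u) (fun v => N v)).
Qed.

Lemma cardD2 x : #|D2 x| = #|N x| * \sum_(v in N x) #|N v|.
Proof.
rewrite /D2 (card_dep (N x) (fun u => [set p : V * V | (p.1 \in N x) && (p.2 \in N p.1)])).
rewrite sum_nat_const; congr (_ * _).
by rewrite (card_dep (N x) (fun v => N v)).
Qed.

Lemma cardD3 x : #|D3 x| = #|N x| * #|N x|.
Proof. by rewrite /D3 (card_dep (N x) (fun _ => N x)) sum_nat_const. Qed.

Lemma del_bound x : 4 * (Ncount P4 G + Ncount K3 G) <=
  4 * (Ncount P4 (Gdel x) + Ncount K3 (Gdel x)) + Bnd #|N x| #|U|.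
Proof.
have h1 := del_P4 x; have h2 := del_K3 x.
rewrite cards0 cardD3 in h2; rewrite cardD1' cardD2 in h1.
set m := #|U| in h1 h2 *; set dx := #|N x| in h1 h2 *.
have hT1 : 4 * (\sum_(u in N x) \sum_(v in N u) #|N v|) <= dx * (m * m + 12 * m).
  rewrite big_distrr /= -sum_nat_const; apply: leq_sum => u _.
  have := sum_deg_nb u; have := d_le u; rewrite -/m; set du := #|N u|; set s := \sum_(v in _) _.
  move=> hdu hs.
  have : 4 * (du * (m - du)) <= m * m.
    have := sq4 du (m - du); rewrite (_ : du + (m - du) = m) //; lia.
  lia.
have hT2 : \sum_(v in N x) #|N v| <= dx * m.
  by rewrite -sum_nat_const; apply: leq_sum => v _; apply: d_le.
have hT2' := leq_mul (leqnn dx) hT2.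
rewrite /Bnd; lia.
Qed.

Lemma Gdel_simple x : simple_graph (Gdel x).
Proof.
apply/forallP => e; apply/implyP; rewrite inE => /andP[eG _].
by move/forallP: sG => /(_ e) /implyP /(_ eG).
Qed.

Lemma Gdel_sub x : Gdel x \subset G.
Proof. by apply/subsetP => e; rewrite inE => /andP[]. Qed.

Lemma Gdel_free x : Ffree C5 (Gdel x).
Proof.
move: fG; rewrite /Ffree -!leqn0 => h; apply: leq_trans h.
exact/Ncount_mono/Gdel_sub.
Qed.

Lemma Gdel_U x e : e \in Gdel x -> e \subset U :\ x.
Proof.
rewrite inE => /andP[/GU eU xe]; apply/subsetP => y ye.
rewrite !inE (subsetP eU y ye) andbT; apply/eqP => yx; move: xe; by rewrite -yx ye.
Qed.

End Deg.

Lemma cardU_le (T : finType) (A B : {set T}) : #|A :|: B| <= #|A| + #|B|.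
Proof. by rewrite cardsU leq_subr. Qed.

Lemma cardsD_ge (T : finType) (A B : {set T}) : #|A| - #|B| <= #|A :\: B|.
Proof. by rewrite cardsD leq_sub2l // subset_leq_card // subsetIr. Qed.

Lemma card_set2_le (T : finType) (a b : T) : #|[set a; b]| <= 2.
Proof. by rewrite cards2; case: (a != b). Qed.

Lemma card_set3_le (T : finType) (a b c : T) : #|[set a; b; c]| <= 3.
Proof. by apply: leq_trans (cardU_le _ _) _; rewrite cards1 addn1 ltnS card_set2_le. Qed.

Lemma card_set4_le (T : finType) (a b c d : T) : #|[set a; b; c; d]| <= 4.
Proof. by apply: leq_trans (cardU_le _ _) _; rewrite cards1 addn1 ltnS card_set3_le. Qed.

Lemma ar1 n s t m k : n - s <= t -> s <= k -> k <= 4 -> 8 <= m -> m + 7 <= 3 * n -> 0 < t.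
Proof. lia. Qed.

Lemma ar2 A B C X p q r m : A + B + C <= X + p + q + r -> X <= m -> p <= 2 -> q <= 2 ->
  r <= 2 -> m + 7 <= 3 * A -> m + 7 <= 3 * B -> m + 7 <= 3 * C -> False.
Proof. lia. Qed.

Lemma uniq4 (V : finType) (a b c d : V) : a != b -> a != c -> a != d ->
  b != c -> b != d -> c != d -> uniq [:: a; b; c; d].
Proof. by move=> *; rewrite /= !inE !negb_or; repeat (apply/andP; split). Qed.

Lemma neqC (T : eqType) (x y : T) : x != y -> y != x.
Proof. by rewrite eq_sym. Qed.

Definition ltr (V : finType) (u v : V) := (enum_rank u < enum_rank v)%N.

Lemma CS (T : finType) (A : {set T}) (F : T -> nat) :
  (\sum_(i in A) F i) * (\sum_(i in A) F i) <= #|A| * \sum_(i in A) (F i * F i).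
Proof.
set S := \sum_(i in A) F i; set S2 := \sum_(i in A) (F i * F i).
have e1 : S * S = \sum_(i in A) \sum_(j in A) F i * F j.
  by rewrite {1}/S big_distrl /=; apply: eq_bigr => i _; rewrite big_distrr.
have e2 : \sum_(i in A) \sum_(j in A) (F i * F i + F j * F j) = #|A| * S2 + #|A| * S2.
  rewrite (eq_bigr (fun i => #|A| * (F i * F i) + S2)); last first.
    by move=> i _; rewrite big_split /= sum_nat_const.
  by rewrite big_split /= sum_nat_const -big_distrr /= mulnC.
have h : 2 * (\sum_(i in A) \sum_(j in A) F i * F j) <=
         \sum_(i in A) \sum_(j in A) (F i * F i + F j * F j).
  rewrite big_distrr /=; apply: leq_sum => i _; rewrite big_distrr /=; apply: leq_sum => j _.
  have := sq4 (F i) (F j); lia.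
lia.
Qed.

Section Tf.
Variables (V : finType) (G : {set {set V}}) (U : {set V}).
Hypothesis sG : simple_graph G.
Hypothesis fG : Ffree C5 G.
Hypothesis GU : forall e, e \in G -> e \subset U.
Local Notation N := (nb G).

Definition TF := forall u v w, v \in N u -> w \in N u -> w \in N v -> False.

Lemma common2 u v a b : v \in N u -> a \in N u -> b \in N v -> uniq [:: u; v; a; b] ->
  #|N a :&: N b| <= 2.
Proof.
move=> vu au bv Hu; apply: leq_trans (card_set2_le u v).
apply/subset_leq_card/subsetP => z; rewrite inE => /andP[za zb].
apply/negPn/negP; rewrite !inE negb_or => /andP[zu zv].
move: Hu; rewrite /= !inE !negb_or => /and4P[/and3P[uv ua ub] /andP[va vb] ab _].
apply: (@noC5 V G fG u a z b v).
- apply: uniq5; first [done | by rewrite eq_sym | exact: (nb_neq sG za)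
                     | by rewrite eq_sym; exact: (nb_neq sG zb)].
- exact: au.
- exact: za.
- by rewrite nbC.
- by rewrite nbC.
- by rewrite nbC.
Qed.

Lemma no_tri : 8 <= #|U| -> (forall x, x \in U -> #|U| + 7 <= 3 * #|N x|) -> TF.
Proof.
move=> m8 low u v w vu wu wv.
have uU := nbU' GU vu; have vU := nbU GU vu; have wU := nbU GU wu.
have lu := low u uU; have lv := low v vU; have lw := low w wU.
have : 0 < #|N u :\: [set v; w]|.
  exact: (ar1 (cardsD_ge _ _) (card_set2_le v w) _ m8 lu).
rewrite card_gt0 => /set0Pn[a]; rewrite !inE negb_or => /andP[/andP[av aw] au].
have aU := nbU GU au; have la := low a aU.
have : 0 < #|N v :\: [set u; w; a]|.
  exact: (ar1 (cardsD_ge _ _) (card_set3_le u w a) _ m8 lv).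
rewrite card_gt0 => /set0Pn[b]; rewrite !inE !negb_or => /andP[/andP[/andP[bu bw] ba] bv].
have bU := nbU GU bv; have lb := low b bU.
have : 0 < #|N w :\: [set u; v; a; b]|.
  exact: (ar1 (cardsD_ge _ _) (card_set4_le u v a b) _ m8 lw).
rewrite card_gt0 => /set0Pn[c]; rewrite !inE !negb_or => /andP[/andP[/andP[/andP[cu cv] ca] cb] cw].
have cU := nbU GU cw; have lc := low c cU.
have hab := common2 vu au bv (uniq4 (nb_neq sG vu) (nb_neq sG au) (neqC bu)
   (neqC av) (nb_neq sG bv) (neqC ba)).
have hac := common2 wu au cw (uniq4 (nb_neq sG wu) (nb_neq sG au) (neqC cu)
   (neqC aw) (nb_neq sG cw) (neqC ca)).
have hbc := common2 wv bv cw (uniq4 (nb_neq sG wv) (nb_neq sG bv) (neqC cv)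
   (neqC bw) (nb_neq sG cw) (neqC cb)).
have hU : #|N a :|: N b :|: N c| <= #|U|.
  by apply: subset_leq_card; rewrite !subUset !(nb_sub GU).
exact: (ar2 (card3 (N a) (N b) (N c)) hU hab hac hbc la lb lc).
Qed.

Hypothesis tf : TF.

Lemma K3_zero : Ncount K3 G = 0.
Proof.
apply/eqP; rewrite -leqn0.
apply: leq_trans (Ncount_img (D := (set0 : {set V})) (h := fun _ => set0) _) _; last by rewrite cards0.
move=> S sS cS; case: (copyK3 cS) => a [b [c [_ ES]]]; subst S.
have [h1 h2 h3] := tri_sub sS; exfalso; exact: tf h1 h2 h3.
Qed.

Lemma deg_tf u v : v \in N u -> #|N u| + #|N v| <= #|U|.
Proof.
move=> vu.
have e : N u :&: N v = set0.
  by apply/setP => w; rewrite !inE; apply/negbTE/negP => /andP[wu wv]; exact: tf vu wu wv.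
rewrite -cardsUI e cards0 addn0; apply: subset_leq_card.
by rewrite subUset !(nb_sub GU).
Qed.

Lemma ltr_total (u v : V) : u != v -> ~~ ltr u v -> ltr v u.
Proof.
move=> nuv; rewrite /ltr -leqNgt leq_eqVlt => /orP[/eqP E|//].
by move: nuv; rewrite -(inj_eq (@enum_rank_inj V)) (val_inj E) eqxx.
Qed.

Definition DT := [set t : V * (V * (V * V)) | (t.1 \in U) &&
  (t.2 \in [set p : V * (V * V) | (p.1 \in [set v in N t.1 | ltr t.1 v]) &&
      (p.2 \in setX (N t.1 :\ p.1) (N p.1 :\ t.1))])].

Lemma P4_tf : Ncount P4 G <=
  \sum_(u in U) \sum_(v in [set v in N u | ltr u v]) ((#|N u| - 1) * (#|N v| - 1)).
Proof.
apply: leq_trans (Ncount_img (D := DT) (h := fun t => pth t.2.2.1 t.1 t.2.1 t.2.2.2) _) _.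
  move=> S sS cS; case: (copyP4 cS) => a [b [c [d [Hu ES]]]]; subst S.
  have [hab hbc hcd] := pth_sub sS.
  move: Hu; rewrite /= !inE !negb_or => /and4P[/and3P[nab nac nad] /andP[nbc nbd] ncd _].
  case: (boolP (ltr b c)) => hl.
    exists (b, (c, (a, d))); last by [].
    by rewrite /DT !inE /= (nbU' GU hbc) hbc hl nbC hab nac hcd eq_sym nbd.
  have hl' := ltr_total nbc hl.
  exists (c, (b, (d, a))); last by rewrite /= pth_rev.
  by rewrite /DT !inE /= (nbU GU hbc) nbC hbc hl' hcd eq_sym nbd nbC hab nac.
rewrite /DT (card_dep U (fun u => [set p : V * (V * V) | (p.1 \in [set v in N u | ltr u v]) &&
      (p.2 \in setX (N u :\ p.1) (N p.1 :\ u))])).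
apply: leq_sum => u _.
rewrite (card_dep [set v in N u | ltr u v] (fun v => setX (N u :\ v) (N v :\ u))).
apply: leq_sum => v; rewrite inE => /andP[vu _].
have uv : u \in N v by rewrite nbC.
rewrite cardsX; have := cardsD1 v (N u); have := cardsD1 u (N v); rewrite vu uv /=.
move=> e1 e2; rewrite [in X in _ <= X]e1 [in X in _ <= X]e2 !add1n !subn1 /=.
done.
Qed.

Lemma sym_half (X : V -> V -> nat) : (forall u v, X u v = X v u) ->
  2 * (\sum_(u in U) \sum_(v in [set v in N u | ltr u v]) X u v) <=
  \sum_(u in U) \sum_(v in N u) X u v.
Proof.
move=> XC.
have eL : \sum_(u in U) \sum_(v in [set v in N u | ltr u v]) X u v =
          \sum_(u in U) \sum_(v in U) ((v \in N u) && ltr u v) * X u v.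
  apply: eq_bigr => u _; rewrite (sum_sub _ (U := U)); last first.
    by apply/subsetP => v; rewrite inE => /andP[/(nbU GU)].
  by apply: eq_bigr => v _; rewrite inE.
have eL' : \sum_(u in U) \sum_(v in [set v in N u | ltr u v]) X u v =
          \sum_(u in U) \sum_(v in U) ((v \in N u) && ltr v u) * X u v.
  rewrite eL exchange_big /=; apply: eq_bigr => u _; apply: eq_bigr => v _.
  by rewrite nbC XC.
have eR : \sum_(u in U) \sum_(v in N u) X u v =
          \sum_(u in U) \sum_(v in U) (v \in N u) * X u v.
  by apply: eq_bigr => u _; rewrite (sum_sub _ (nb_sub GU u)).
rewrite mul2n -addnn {1}eL eL' eR -big_split /=; apply: leq_sum => u _.
rewrite -big_split /=; apply: leq_sum => v _; rewrite -mulnDl leq_mul2r.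
have : ~~ (ltr u v && ltr v u).
  by rewrite /ltr; apply/negP => /andP[h1 h2]; move: (ltn_trans h1 h2); rewrite ltnn.
by case: (v \in N u); case: (ltr u v); case: (ltr v u); rewrite ?orbT.
Qed.

Lemma X_bound : \sum_(u in U) \sum_(v in N u) ((#|N u| - 1) * (#|N v| - 1)) <=
  Qf #|U| * \sum_(u in U) #|N u|.
Proof.
rewrite big_distrr /=; apply: leq_sum => u _.
rewrite mulnC -sum_nat_const; apply: leq_sum => v vu.
have uv : u \in N v by rewrite nbC.
apply: prodQ; last exact: deg_tf vu.
  by rewrite card_gt0; apply/set0Pn; exists v.
by rewrite card_gt0; apply/set0Pn; exists u.
Qed.

Lemma mantel : 2 * \sum_(u in U) #|N u| <= #|U| * #|U|.
Proof.
set D := \sum_(u in U) #|N u|; set S2 := \sum_(u in U) (#|N u| * #|N u|); set m := #|U|.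
have e1 : \sum_(u in U) \sum_(v in N u) (#|N u| + #|N v|) = 2 * S2.
  rewrite (eq_bigr (fun u => #|N u| * #|N u| + \sum_(v in N u) #|N v|)); last first.
    by move=> u _; rewrite big_split /= sum_nat_const.
  rewrite big_split /= mul2n -addnn; congr (_ + _).
  rewrite (eq_bigr (fun u => \sum_(v in U) (v \in N u) * #|N v|)); last first.
    by move=> u _; rewrite (sum_sub _ (nb_sub GU u)).
  rewrite exchange_big /=; apply: eq_bigr => v _.
  rewrite -big_distrl /=; congr (_ * _).
  rewrite -sum1_card (sum_sub _ (nb_sub GU v)); apply: eq_bigr => u _.
  by rewrite muln1 nbC.
have e2 : \sum_(u in U) \sum_(v in N u) (#|N u| + #|N v|) <= m * D.
  rewrite /D big_distrr /=; apply: leq_sum => u _.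
  rewrite mulnC -sum_nat_const; apply: leq_sum => v vu; exact: deg_tf.
have cs := CS U (fun u => #|N u|); rewrite -/D -/S2 -/m in cs.
have h : (2 * D) * D <= (m * m) * D.
  have := leq_mul (leqnn m) (leq_trans (eq_leq (esym e1)) e2).
  lia.
case: (posnP D) => [->|Dp]; first by rewrite muln0.
by rewrite leq_pmul2r in h.
Qed.

Lemma tf_bound : Ncount P4 G + Ncount K3 G <= Pf #|U|.
Proof.
rewrite K3_zero addn0.
apply: leq_trans P4_tf _.
apply: (final_arith (D := \sum_(u in U) #|N u|)); last exact: mantel.
apply: leq_trans (X_bound).
apply: sym_half => u v; exact: mulnC.
Qed.

End Tf.

Definition phi (V : finType) (G : {set {set V}}) := Ncount P4 G + Ncount K3 G.

Lemma Bnd_mono d d' m m' : d <= d' -> m <= m' -> Bnd d m <= Bnd d' m'.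
Proof.
move=> hd hm; rewrite /Bnd.
have h1 : m * m + 12 * m <= m' * m' + 12 * m' by apply: leq_add; [apply: leq_mul|rewrite leq_mul2l hm orbT].
by apply: leq_add; [apply: leq_add|]; rewrite ?leq_mul2l ?leq_mul //; apply: leq_mul => //; apply: leq_mul.
Qed.

Section Induct.
Variable V : finType.

Definition good (G : {set {set V}}) (U : {set V}) :=
  [/\ simple_graph G, Ffree C5 G & forall e, e \in G -> e \subset U].

Lemma good_del G U x : good G U -> good (Gdel G x) (U :\ x).
Proof.
case=> sG fG GU; split; [exact: Gdel_simple|exact: Gdel_free|].
by move=> e; apply: Gdel_U.
Qed.

Lemma good_empty G U : good G U -> #|U| = 0 -> phi G = 0.
Proof.
case=> sG fG GU U0; apply/eqP; rewrite -leqn0.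
have tf : TF G.
  move=> u v w vu; move: (nbU GU vu); rewrite (cards0_eq U0) inE //.
by have := tf_bound sG fG GU tf; rewrite U0.
Qed.

Lemma crude m : forall G U, good G U -> #|U| = m -> 4 * phi G <= m * Bnd m m.
Proof.
elim: m => [|m IH] G U gG hU.
  by rewrite (good_empty gG hU) muln0.
have : 0 < #|U| by rewrite hU.
rewrite card_gt0 => /set0Pn[x xU].
case: (gG) => sG fG GU.
have h1 := del_bound sG fG GU x.
have hU' : #|U :\ x| = m by move: (cardsD1 x U); rewrite xU hU add1n => -[].
have h2 := IH _ _ (good_del x gG) hU'.
have h3 : Bnd #|nb G x| #|U| <= Bnd m.+1 m.+1.
  by apply: Bnd_mono; rewrite -hU ?(d_le GU).
have h4 : Bnd m m <= Bnd m.+1 m.+1 by apply: Bnd_mono.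
have h5 := leq_mul (leqnn m) h4.
rewrite /phi in h2 *; rewrite mulSn; lia.
Qed.

Definition N0 := 100.
Definition C0 := N0 * Bnd N0 N0 + N0.

Lemma prog m : forall G U, good G U -> #|U| = m -> 4 * phi G <= 4 * Pf m + (C0 - m).
Proof.
elim: m => [|m IH] G U gG hU.
  by rewrite (good_empty gG hU).
case: (leqP m.+1 N0) => hm.
  have h1 := crude gG hU.
  have h2 : m.+1 * Bnd m.+1 m.+1 <= N0 * Bnd N0 N0 by apply: leq_mul => //; apply: Bnd_mono.
  rewrite /C0; lia.
case: (gG) => sG fG GU.
case: (boolP [exists x in U, 3 * #|nb G x| <= #|U| + 6]).
  case/exists_inP => x xU hx.
  have h1 := del_bound sG fG GU x.
  have hU' : #|U :\ x| = m by move: (cardsD1 x U); rewrite xU hU add1n => -[].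
  have h2 := IH _ _ (good_del x gG) hU'.
  rewrite hU in hx h1.
  have h3 := low_arith (ltnW hm) hx.
  rewrite subn1 /= in h3.
  rewrite /phi in h2 *; lia.
move=> nlow.
have low : forall x, x \in U -> #|U| + 7 <= 3 * #|nb G x|.
  move=> x xU; move/exists_inP: nlow => nl.
  case: (leqP (3 * #|nb G x|) (#|U| + 6)) => h; last by rewrite addnS.
  by exfalso; apply: nl; exists x.
have m8 : 8 <= #|U| by rewrite hU; apply: leq_trans (ltnW hm).
have tf := no_tri sG fG GU m8 low.
have := tf_bound sG fG GU tf.
rewrite /phi hU; lia.
Qed.

Lemma phi_bound G U : good G U -> C0 <= #|U| -> phi G <= Pf #|U|.
Proof.
move=> gG hC; have := prog gG (erefl _).
rewrite (_ : C0 - #|U| = 0) ?addn0; last by apply/eqP; rewrite subn_eq0.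
by rewrite leq_mul2l.
Qed.

End Induct.

Section Bip.
Variable V : finType.
Variable A : {set V}.

Definition Kab := [set e : {set V} | [exists x in A, exists y in ~: A, e == [set x; y]]].

Lemma Kab_edge p q : [set p; q] \in Kab -> (p \in A) = ~~ (q \in A).
Proof.
rewrite inE => /exists_inP[x xA /exists_inP[y yA /eqP E]].
rewrite inE in yA.
have xy : x != y by apply/eqP => exy; move: yA; rewrite -exy xA.
have hp : p \in [set x; y] by rewrite -E set21.
have hq : q \in [set x; y] by rewrite -E set22.
have hx : x \in [set p; q] by rewrite E set21.
have hy : y \in [set p; q] by rewrite E set22.
move: hp hq hx hy; rewrite !inE => /orP[]/eqP-> /orP[]/eqP->;
  rewrite ?xA ?(negbTE yA) ?(negbTE xy) ?(eq_sym y x) ?(negbTE xy) //.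
Qed.

Lemma Kab_simple : simple_graph Kab.
Proof.
apply/forallP => e; apply/implyP; rewrite inE => /exists_inP[x xA /exists_inP[y yA /eqP ->]].
rewrite inE in yA.
have xy : x != y by apply/eqP => exy; move: yA; rewrite -exy xA.
by rewrite cards2 xy.
Qed.

Lemma Kab_free : Ffree C5 Kab.
Proof.
rewrite /Ffree /Ncount cards_eq0; apply/eqP/setP => S; rewrite !inE.
apply/negbTE/negP => /andP[sS cS].
case: (copyC5 cS) => a [b [c [d [e [_ ES]]]]]; subst S.
move/subsetP: sS => H.
have h1 := Kab_edge (H _ (_ : [set a; b] \in cyc a b c d e)).
have h2 := Kab_edge (H _ (_ : [set b; c] \in cyc a b c d e)).
have h3 := Kab_edge (H _ (_ : [set c; d] \in cyc a b c d e)).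
have h4 := Kab_edge (H _ (_ : [set d; e] \in cyc a b c d e)).
have h5 := Kab_edge (H _ (_ : [set e; a] \in cyc a b c d e)).
move: h1 h2 h3 h4 h5; rewrite !inE !eqxx ?orbT => /(_ isT) h1 /(_ isT) h2 /(_ isT) h3 /(_ isT) h4 /(_ isT) h5.
move: h1 h2 h3 h4 h5.
by case: (a \in A); case: (b \in A); case: (c \in A); case: (d \in A); case: (e \in A).
Qed.

Lemma edgeAB p q x y : p \in A -> q \notin A -> x \in A -> y \notin A ->
  [set p; q] = [set x; y] -> p = x /\ q = y.
Proof.
move=> pA qA xA yA E.
have hp : p \in [set x; y] by rewrite -E set21.
have hq : q \in [set x; y] by rewrite -E set22.
move: hp hq; rewrite !inE => /orP[]/eqP hp /orP[]/eqP hq.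
- by move: qA; rewrite hq xA.
- by [].
- by move: yA; rewrite -hp pA.
- by move: yA; rewrite -hp pA.
Qed.

Lemma in_pthAB p0 p1 p2 p3 x y : p0 \in A -> p1 \notin A -> p2 \in A -> p3 \notin A ->
  x \in A -> y \notin A -> [set x; y] \in pth p0 p1 p2 p3 ->
  (x = p0 /\ y = p1) \/ (x = p2 /\ y = p1) \/ (x = p2 /\ y = p3).
Proof.
move=> p0A p1A p2A p3A xA yA; rewrite !inE => /orP[/orP[]|] /eqP E.
- by left; apply: edgeAB E.
- by right; left; rewrite (set2C p1 p2) in E; apply: edgeAB E.
- by right; right; apply: edgeAB E.
Qed.

Definition AA := [set q : V * V | (q.1 \in A) && (q.2 \in A :\ q.1)].
Definition BB := [set q : V * V | (q.1 \in ~: A) && (q.2 \in ~: A :\ q.1)].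
Definition DB := setX AA BB.
Definition gP (t : (V * V) * (V * V)) := pth t.1.1 t.2.1 t.1.2 t.2.2.

Lemma card_AA (X : {set V}) : #|[set q : V * V | (q.1 \in X) && (q.2 \in X :\ q.1)]| = #|X| * (#|X| - 1).
Proof.
rewrite (card_dep X (fun a => X :\ a)) -sum_nat_const; apply: eq_bigr => a aX.
by move: (cardsD1 a X); rewrite aX add1n => ->; rewrite subn1.
Qed.

Lemma Kab_count : #|A| * (#|A| - 1) * (#|~: A| * (#|~: A| - 1)) <= Ncount P4 Kab.
Proof.
have -> : #|A| * (#|A| - 1) * (#|~: A| * (#|~: A| - 1)) = #|DB|.
  by rewrite /DB cardsX /AA /BB !card_AA.
have inj : {in DB &, injective gP}.
  move=> [[p0 p2] [p1 p3]] [[q0 q2] [q1 q3]]; rewrite !inE /=.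
  case/andP => /andP[p0A /andP[p20 p2A]] /andP[p1A /andP[p31 p3A]].
  case/andP => /andP[q0A /andP[q20 q2A]] /andP[q1A /andP[q31 q3A]].
  rewrite /gP /= => E.
  have h1 : [set q0; q1] \in pth p0 p1 p2 p3 by rewrite E !inE eqxx.
  have h2 : [set q2; q1] \in pth p0 p1 p2 p3 by rewrite E (set2C q2 q1) !inE eqxx ?orbT.
  have h3 : [set q2; q3] \in pth p0 p1 p2 p3 by rewrite E !inE eqxx ?orbT.
  have k1 := in_pthAB p0A p1A p2A p3A q0A q1A h1.
  have k2 := in_pthAB p0A p1A p2A p3A q2A q1A h2.
  have k3 := in_pthAB p0A p1A p2A p3A q2A q3A h3.
  move/eqP: p20 => p20; move/eqP: p31 => p31; move/eqP: q20 => q20; move/eqP: q31 => q31.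
  clear E h1 h2 h3.
  decompose [or and] k1; decompose [or and] k2; decompose [or and] k3; subst; congruence.
rewrite -(card_in_imset inj) /Ncount; apply: subset_leq_card; apply/subsetP => S.
case/imsetP => -[[p0 p2] [p1 p3]]; rewrite !inE /=.
case/andP => /andP[p0A /andP[p20 p2A]] /andP[p1A /andP[p31 p3A]] ->.
rewrite /gP /=; apply/andP; split.
  apply/subsetP => e; rewrite !inE => /orP[/orP[]|] /eqP ->.
  - by apply/exists_inP; exists p0 => //; apply/exists_inP; exists p1; rewrite ?inE ?eqxx.
  - by apply/exists_inP; exists p2 => //; apply/exists_inP; exists p1; rewrite ?inE // set2C eqxx.
  - by apply/exists_inP; exists p2 => //; apply/exists_inP; exists p3; rewrite ?inE ?eqxx.
apply: copyP4_of; apply: uniq4.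
- by apply/eqP => E; move: p1A; rewrite -E p0A.
- by rewrite eq_sym.
- by apply/eqP => E; move: p3A; rewrite -E p0A.
- by apply/eqP => E; move: p1A; rewrite E p2A.
- by rewrite eq_sym.
- by apply/eqP => E; move: p3A; rewrite -E p2A.
Qed.

End Bip.

Lemma exists_K n : exists G : {set {set 'I_n}},
  [/\ simple_graph G, Ffree C5 G & Pf n <= Ncount P4 G].
Proof.
set k := n./2.
have hk : k <= n by rewrite /k -{2}(odd_double_half n) -addnn addnA leq_addl.
pose A := [set widen_ord hk i | i : 'I_k].
have hA : #|A| = k.
  rewrite card_imset ?card_ord // => i j /(congr1 val) /= E; exact: val_inj.
have hB : #|~: A| = n - k by move: (cardsC A); rewrite hA card_ord; lia.
exists (Kab A); split; [exact: Kab_simple|exact: Kab_free|].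
apply: leq_trans (Kab_count A); rewrite hA hB /Pf /Qf -/k.
by rewrite mulnACA.
Qed.

Theorem mainTheorem5 :
  exists n0 : nat, forall n : nat, n0 <= n ->
    let M := maxn (ex n P4 C5) (ex n K3 C5) in
    (* color-resistant *)
    excol n P4 K3 C5 = M /\
    (* resistant *)
    (exists G : {set {set 'I_n}},
        [/\ simple_graph G, Ffree C5 G,
            Ncount P4 G = M \/ Ncount K3 G = M &
            ex2 n P4 K3 C5 = Ncount P4 G + Ncount K3 G]).
Proof.
exists C0 => n hn M.
have hphi : forall G : {set {set 'I_n}}, simple_graph G -> Ffree C5 G -> phi G <= Pf n.
  move=> G sG fG.
  have eT : #|[set: 'I_n]| = n by rewrite cardsT card_ord.
  have gG : good G [set: 'I_n] by split => // e _; apply: subsetT.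
  have hC : C0 <= #|[set: 'I_n]| by rewrite eT.
  have := phi_bound gG hC.
  by rewrite eT.
have h1 : ex n P4 C5 <= Pf n.
  apply/bigmax_leqP => G /andP[sG fG]; apply: leq_trans (hphi G sG fG); exact: leq_addr.
have h2 : ex n K3 C5 <= Pf n.
  apply/bigmax_leqP => G /andP[sG fG]; apply: leq_trans (hphi G sG fG); exact: leq_addl.
have [K [sK fK hK]] := exists_K n.
have hKe : Ncount P4 K <= ex n P4 C5.
  by rewrite /ex; apply: (@leq_bigmax_cond _ (fun G => simple_graph G && Ffree C5 G)
      (fun G => Ncount P4 G) K); rewrite sK fK.
have eM : M = ex n P4 C5 by rewrite /M; apply/maxn_idPl; lia.
have hc1 : excol n P4 K3 C5 <= Pf n.
  apply/bigmax_leqP => -[G C] /= /andP[sG fG].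
  apply: leq_trans (hphi G sG fG); apply: leq_add; apply: Ncount_mono.
    exact: subsetIl.
  exact: subsetDl.
have hc2 : ex n P4 C5 <= excol n P4 K3 C5.
  apply/bigmax_leqP => G /andP[sG fG].
  rewrite /excol.
  apply: leq_trans (@leq_bigmax_cond _
      (fun GC : {set {set 'I_n}} * {set {set 'I_n}} => simple_graph GC.1 && Ffree C5 GC.1)
      (fun GC : {set {set 'I_n}} * {set {set 'I_n}} =>
      Ncount P4 (GC.1 :&: GC.2) + Ncount K3 (GC.1 :\: GC.2)) (G, setT) _).
    by rewrite /= setIT leq_addr.
  by rewrite /= sG fG.
have he2 : ex2 n P4 K3 C5 <= Pf n.
  by apply/bigmax_leqP => G /andP[sG fG]; apply: hphi.
have he2' : Ncount P4 K + Ncount K3 K <= ex2 n P4 K3 C5.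
  by rewrite /ex2; apply: (@leq_bigmax_cond _ (fun G => simple_graph G && Ffree C5 G)
      (fun G => Ncount P4 G + Ncount K3 G) K); rewrite sK fK.
have hKp := hphi K sK fK; rewrite /phi in hKp.
split; first by rewrite eM; lia.
exists K; split => //; first by left; rewrite eM; lia.
lia.
Qed.
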